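(* Let $n\ge 3$ and let $Q$ be the subposet of the face poset of $\Delta_{n+1}$ consisting of all faces of the form $A(F)$, $B(F)$, $C(F,S)$, $D(F,S)$ with $F$ a face of $\Delta_n$ and $S\in F$. Let $M$ be the matching on $Q$ pairing $A(F)$ with $B(F)$ for every face $F$ of $\Delta_n$, and $C(F,S)$ with $D(F,S)$ for every face $F$ of $\Delta_n$ and $S\in F$. Then $M$ is a Morse matching on $Q$.
   Context: The Whitehouse complex $\Delta_n$ ($n\ge 3$) is the simplicial complex with vertex set $V_n=\{S\subseteq\{2,\dots,n\}: 2\le |S|\le n-2\}$, in which a subset $F\subseteq V_n$ is a face iff for all $S,T\in F$ one has $S\subseteq T$, $T\subseteq S$, or $S\cap T=\emptyset$. (So $\Delta_3=\{\emptyset\}$.) Its face poset is the set of faces (including $\emptyset$) ordered by inclusion, ranked by cardinality. For a face $F$ of $\Delta_n$: $A(F)=F$; $B(F)=F\cup\{\{2,\dots,n\}\}$; for $S\in F$, $C(F,S)=\{T\cup\{n+1\}: T\in F, S\subseteq T\}\cup\{T: T\in F, S\not\subseteq T\}$ and $D(F,S)=C(F,S)\cup\{S\}$. These are faces of $\Delta_{n+1}$. A matching $M$ on a ranked poset is a set of disjoint cover pairs $x\lessdot y$; orienting all cover edges downward except those in $M$, which are oriented upward, $M$ is a Morse matching if the resulting directed graph is acyclic. *)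

(* Defs.v *)
From mathcomp Require Import all_boot.
From Stdlib Require Import Relations.
Set Implicit Arguments. Unset Strict Implicit. Unset Printing Implicit Defensive.

(* Ambient ground type: 'I_(n.+2) = {0,...,n+1}; it contains {2,...,n}
   (vertices of Delta_n) and {2,...,n+1} (vertices of Delta_(n+1)). *)

Section Whitehouse.
Variable n : nat.
Local Notation E := ('I_n.+2).

Definition ground (k : nat) : {set E} := [set i : E | 2 <= i <= k].

Definition is_vertex (k : nat) (S : {set E}) : bool :=
  (S \subset ground k) && (2 <= #|S| <= k - 2).

Definition laminar (F : {set {set E}}) : bool :=
  [forall S in F, forall T in F,
     [|| S \subset T, T \subset S | [disjoint S & T]]].

Definition is_face (k : nat) (F : {set {set E}}) : bool :=
  [forall S in F, is_vertex k S] && laminar F.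

Definition top_el : E := ord_max.

Definition Aface (F : {set {set E}}) : {set {set E}} := F.
Definition Bface (F : {set {set E}}) : {set {set E}} := F :|: [set ground n].
Definition Cface (F : {set {set E}}) (S : {set E}) : {set {set E}} :=
  [set T :|: [set top_el] | T in [set T in F | S \subset T]]
  :|: [set T in F | ~~ (S \subset T)].
Definition Dface (F : {set {set E}}) (S : {set E}) : {set {set E}} :=
  Cface F S :|: [set S].

Definition inQ (G : {set {set E}}) : bool :=
  is_face n.+1 G &&
  ([exists F, is_face n F && ((G == Aface F) || (G == Bface F))]
   || [exists F, exists S, [&& is_face n F, S \in F &
          (G == Cface F S) || (G == Dface F S)]]).

Definition coverQ (x y : {set {set E}}) : bool :=
  [&& inQ x, inQ y, x \proper y &
      [forall z, ~~ [&& inQ z, x \proper z & z \proper y]]].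

Definition matchedM (x y : {set {set E}}) : bool :=
  [exists F, [&& is_face n F, x == Aface F & y == Bface F]]
  || [exists F, exists S, [&& is_face n F, S \in F,
                             x == Cface F S & y == Dface F S]].

End Whitehouse.

(* Generic notion of a Morse matching w.r.t. a cover relation [cov]
   (cov x y means x is covered by y) and a set of pairs [M]
   (M x y means the cover pair x < y is in the matching). *)
Section Morse.
Variable T : finType.

Definition is_matching (cov M : rel T) : Prop :=
  (forall x y, M x y -> cov x y) /\
  (forall x y x' y', M x y -> M x' y' ->
     [|| x == x', x == y', y == x' | y == y'] -> x = x' /\ y = y').

(* Hasse diagram edges oriented downward, except matched ones upward *)
Definition morse_edge (cov M : rel T) (u v : T) : bool :=
  (cov v u && ~~ M v u) || M u v.

Definition is_morse_matching (cov M : rel T) : Prop :=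
  is_matching cov M /\
  forall x, ~ clos_trans T (fun u v => morse_edge cov M u v) x x.
End Morse.

(* Main.v *)
Require Import Defs.
From mathcomp Require Import all_boot zify.
From Stdlib Require Import Relations.
Set Implicit Arguments. Unset Strict Implicit.
Section S.
Variable n : nat.
Hypothesis hn : 3 <= n.
Local Notation E := ('I_n.+2).
Local Notation g := (ground n n).
Local Notation top := (top_el n).
Local Notation face := (is_face n).

Lemma cardD1E (T : finType) (A : {set T}) x : x \in A -> #|A :\ x| = #|A|.-1.
Proof. by move=> H; rewrite (cardsD1 x A) H. Qed.

Lemma card_ground : #|g| = n.-1.
Proof.
have -> : g = [set: E] :\ ord0 :\ (inord 1) :\ ord_max.
  apply/setP => i; rewrite !inE -!val_eqE /= inordK //.
  case: i => i Hi /=. apply/idP/idP; lia.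
rewrite cardD1E; last by rewrite !inE -!val_eqE /= ?inordK //; lia.
rewrite cardD1E; last by rewrite !inE -!val_eqE /= ?inordK //; lia.
rewrite cardD1E; last by rewrite !inE.
by rewrite cardsT card_ord.
Qed.

Lemma top_notin_g : top \notin g.
Proof. by rewrite inE /= ltnn andbF. Qed.

Lemma vertex_noTop (S : {set E}) : is_vertex n S -> top \notin S.
Proof. case/andP=> /subsetP H _; apply/negP => /H; by rewrite (negbTE top_notin_g). Qed.

Lemma face_vertex (F : {set {set E}}) (S : {set E}) : face F -> S \in F -> is_vertex n S.
Proof. by case/andP=> /forall_inP H _ /H. Qed.

Definition lam (S T : {set E}) := [|| S \subset T, T \subset S | [disjoint S & T]].

Lemma face_lam (F : {set {set E}}) (S T : {set E}) : face F -> S \in F -> T \in F -> lam S T.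
Proof. by case/andP=> _ /forall_inP H /H /forall_inP H2 /H2. Qed.

Lemma lamC S T : lam S T = lam T S.
Proof. by rewrite /lam disjoint_sym; case: (S \subset T); case: (T \subset S). Qed.

Lemma laminarP (G : {set {set E}}) :
  (forall S T, S \in G -> T \in G -> lam S T) -> laminar G.
Proof. move=> H; apply/forall_inP => S HS; apply/forall_inP => T HT; exact: H. Qed.

Definition h (S T : {set E}) := if S \subset T then T :|: [set top] else T.

Lemma memC (F : {set {set E}}) (S X : {set E}) : X \in Cface F S -> exists2 T, T \in F & X = h S T.
Proof.
rewrite /Cface !inE => /orP[/imsetP[T]|].
  by rewrite inE => /andP[H1 H2] ->; exists T => //; rewrite /h H2.
by case/andP=> H1 H2; exists X => //; rewrite /h (negbTE H2).
Qed.

Lemma hC (F : {set {set E}}) (S T : {set E}) : T \in F -> h S T \in Cface F S.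
Proof.
rewrite /h /Cface => HT; case: ifP => H; rewrite inE; apply/orP.
  by left; apply/imsetP; exists T; rewrite // inE HT.
by right; rewrite inE HT H.
Qed.

Lemma disjE (A B : {set E}) : reflect (forall x, x \in A -> x \notin B) [disjoint A & B].
Proof.
rewrite disjoint_subset; apply: (iffP subsetP) => H x /H; by rewrite ?inE.
Qed.

Lemma vertex_gt0 (S : {set E}) : is_vertex n S -> exists x, x \in S.
Proof. case/andP=> _ /andP[H _]; apply/card_gt0P; exact: leq_trans H. Qed.

Lemma lam_h (F : {set {set E}}) (S T1 T2 : {set E}) : face F -> S \in F -> T1 \in F -> T2 \in F ->
  lam (h S T1) (h S T2).
Proof.
move=> HF HS H1 H2.
have top1 := vertex_noTop (face_vertex HF H1).
have top2 := vertex_noTop (face_vertex HF H2).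
have L := face_lam HF H1 H2.
have key : forall T1 T2, T1 \in F -> T2 \in F -> lam T1 T2 -> top \notin T2 ->
    S \subset T1 -> ~~ (S \subset T2) -> lam (T1 :|: [set top]) T2.
  move=> U1 U2 _ _ /or3P[HU|HU|HU] t2 s1 s2.
  - by rewrite (subset_trans s1 HU) in s2.
  - by rewrite /lam (subset_trans HU (subsetUl _ _)) orbT.
  - rewrite /lam; apply/orP; right; apply/orP; right; apply/disjE => x.
    rewrite !inE => /orP[xU|/eqP->//]; exact: (disjE _ _ HU).
rewrite /h; case: ifP => s1; case: ifP => s2.
- case/or3P: L => HL.
  + by rewrite /lam (setSU _ HL).
  + by rewrite /lam (setSU _ HL) orbT.
  + have [x xS] := vertex_gt0 (face_vertex HF HS).
    by move/disjE: HL => /(_ x (subsetP s1 x xS)); rewrite (subsetP s2 x xS).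
- by apply: key => //; rewrite s2.
- by rewrite lamC; apply: key => //; [rewrite lamC | rewrite s1].
- exact: L.
Qed.

Lemma lam_Sh (F : {set {set E}}) (S T : {set E}) : face F -> S \in F -> T \in F ->
  lam S (h S T).
Proof.
move=> HF HS HT; rewrite /h; case: ifP => sT.
  by rewrite /lam (subset_trans sT (subsetUl _ _)).
by move: (face_lam HF HS HT); rewrite /lam sT.
Qed.


Lemma ground_sub : ground n n \subset ground n n.+1.
Proof. apply/subsetP => x; rewrite !inE; lia. Qed.

Lemma top_ground1 : top \in ground n n.+1.
Proof. rewrite inE /=; lia. Qed.

Lemma vertex_lift (S : {set E}) : is_vertex n S -> is_vertex n.+1 S.
Proof.
case/andP=> H1 H2; rewrite /is_vertex (subset_trans H1 ground_sub) /=.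
move: H2; case/andP => a b; apply/andP; split => //; apply: leq_trans b _; lia.
Qed.

Lemma vertex_g : is_vertex n.+1 g.
Proof. rewrite /is_vertex ground_sub card_ground /=; lia. Qed.

Lemma vertex_top (S : {set E}) : is_vertex n S -> is_vertex n.+1 (S :|: [set top]).
Proof.
move=> HS; have t := vertex_noTop HS.
case/andP: HS => H1 H2; rewrite /is_vertex setUC cardsU1 t.
rewrite subUset sub1set top_ground1 (subset_trans H1 ground_sub) /=.
set m := #|S| in H2 *. lia.
Qed.

Lemma vertex_neq_g (S : {set E}) : is_vertex n S -> S != g.
Proof.
case/andP=> _ H; apply/negP => /eqP HS; move: H; rewrite HS card_ground; lia.
Qed.

Lemma g_notin (F : {set {set E}}) : face F -> g \notin F.
Proof. move=> HF; apply/negP => /(face_vertex HF) /vertex_neq_g; by rewrite eqxx. Qed.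

Lemma face_A (F : {set {set E}}) : face F -> is_face n.+1 (Aface F).
Proof.
move=> HF; rewrite /is_face /Aface; case/andP: (HF) => _ ->; rewrite andbT.
apply/forall_inP => S HS; exact: vertex_lift (face_vertex HF HS).
Qed.

Lemma face_B (F : {set {set E}}) : face F -> is_face n.+1 (Bface F).
Proof.
move=> HF; rewrite /is_face /Bface; apply/andP; split.
  apply/forall_inP => S; rewrite !inE => /orP[HS|/eqP->]; last exact: vertex_g.
  exact: vertex_lift (face_vertex HF HS).
apply: laminarP => S T; rewrite !inE => /orP[HS|/eqP->] /orP[HT|/eqP->].
- exact: face_lam HF HS HT.
- by case/andP: (face_vertex HF HS) => H _; rewrite /lam H.
- by case/andP: (face_vertex HF HT) => H _; rewrite /lam H orbT.
- by rewrite /lam subxx.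
Qed.

Lemma vertex_h (F : {set {set E}}) (S T : {set E}) : face F -> T \in F -> is_vertex n.+1 (h S T).
Proof.
move=> HF HT; rewrite /h; case: ifP => _.
  exact: vertex_top (face_vertex HF HT).
exact: vertex_lift (face_vertex HF HT).
Qed.

Lemma face_C (F : {set {set E}}) (S : {set E}) : face F -> S \in F -> is_face n.+1 (Cface F S).
Proof.
move=> HF HS; apply/andP; split.
  apply/forall_inP => X /memC [T HT ->]. exact: (vertex_h S HF HT).
apply: laminarP => X Y /memC [T1 H1 ->] /memC [T2 H2 ->]; exact: (lam_h HF HS H1 H2).
Qed.

Lemma face_D (F : {set {set E}}) (S : {set E}) : face F -> S \in F -> is_face n.+1 (Dface F S).
Proof.
move=> HF HS; apply/andP; split.
  apply/forall_inP => X; rewrite /Dface inE => /orP[/memC [T HT ->]|]; first exact: (vertex_h S HF HT).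
  by rewrite inE => /eqP ->; exact: vertex_lift (face_vertex HF HS).
apply: laminarP => X Y; rewrite /Dface in_setU in_set1.
case/orP=> [/memC [T1 H1 ->]|/eqP->]; rewrite in_setU in_set1; case/orP=> [/memC [T2 H2 ->]|/eqP->].
- exact: (lam_h HF HS H1 H2).
- by rewrite lamC; exact: (lam_Sh HF HS H1).
- exact: (lam_Sh HF HS H2).
- by rewrite /lam subxx.
Qed.


Lemma setU1_inj (A B : {set E}) : top \notin A -> top \notin B ->
  A :|: [set top] = B :|: [set top] -> A = B.
Proof.
move=> a b e; rewrite -(setU1K a) -(setU1K b); congr (_ :\ _); by rewrite setUC e setUC.
Qed.

Lemma h_top (S T : {set E}) : top \notin T -> (top \in h S T) = (S \subset T).
Proof.
move=> t; rewrite /h; case: ifP => H; first by rewrite !inE eqxx orbT.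
by rewrite (negbTE t).
Qed.

Lemma SC (F : {set {set E}}) (S : {set E}) : S \in F -> S :|: [set top] \in Cface F S.
Proof. move=> HS; have := hC S HS; by rewrite /h subxx. Qed.

Lemma S_notin_C (F : {set {set E}}) (S : {set E}) : face F -> S \in F -> S \notin Cface F S.
Proof.
move=> HF HS; apply/negP => /memC [T HT e].
have tS := vertex_noTop (face_vertex HF HS).
have tT := vertex_noTop (face_vertex HF HT).
move: e; rewrite /h; case: ifP => H e.
  by move: tS; rewrite e !inE eqxx orbT.
by move: H; rewrite -e subxx.
Qed.

Lemma g_notin_C (F : {set {set E}}) (S : {set E}) : face F -> g \notin Cface F S.
Proof.
move=> HF; apply/negP => /memC [T HT]; rewrite /h; case: ifP => H e.
  by move: top_notin_g; rewrite e !inE eqxx orbT.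
by move: (g_notin HF); rewrite e HT.
Qed.

Lemma noPair_C (F : {set {set E}}) (S Y : {set E}) : face F -> S \in F -> top \notin Y ->
  Y \in Cface F S -> Y :|: [set top] \in Cface F S -> False.
Proof.
move=> HF HS tY /memC [T1 H1 e1] /memC [T2 H2 e2].
have t1 := vertex_noTop (face_vertex HF H1).
have t2 := vertex_noTop (face_vertex HF H2).
move: e1 e2; rewrite /h; case: ifP => s1 e1.
  by move: tY; rewrite e1 !inE eqxx orbT.
subst Y; case: ifP => s2 e2.
  have := setU1_inj t1 t2 e2; move=> e; by rewrite e s2 in s1.
by move: t2; rewrite -e2 !inE eqxx orbT.
Qed.

Lemma topC_sub (F : {set {set E}}) (S X : {set E}) : face F ->
  X \in Cface F S -> top \in X -> S \subset X.
Proof.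
move=> HF /memC [T HT ->]; have t := vertex_noTop (face_vertex HF HT).
rewrite h_top // => sT; rewrite /h sT; exact: subset_trans sT (subsetUl _ _).
Qed.

Lemma S_in_D (F : {set {set E}}) (S : {set E}) : S \in Dface F S.
Proof. by rewrite /Dface; apply/setUP; right; rewrite in_set1. Qed.

Lemma C_sub_D (F : {set {set E}}) (S X : {set E}) : X \in Cface F S -> X \in Dface F S.
Proof. by move=> H; rewrite /Dface; apply/setUP; left. Qed.

Lemma uniqPair_D (F : {set {set E}}) (S Y : {set E}) : face F -> S \in F -> top \notin Y ->
  Y \in Dface F S -> Y :|: [set top] \in Dface F S -> Y = S.
Proof.
move=> HF HS tY; rewrite /Dface in_setU in_set1 => /orP[HY|/eqP//].
rewrite in_setU in_set1 => /orP[HY2|/eqP e].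
  by case: (noPair_C HF HS tY HY HY2).
have tS := vertex_noTop (face_vertex HF HS).
by move: tS; rewrite -e !inE eqxx orbT.
Qed.


Lemma matchedP (x y : {set {set E}}) : matchedM x y ->
  (exists F, [/\ face F, x = F & y = Bface F]) \/
  (exists F S, [/\ face F, S \in F, x = Cface F S & y = Dface F S]).
Proof.
case/orP => [/existsP [F /and3P[HF /eqP e1 /eqP e2]]|/existsP [F /existsP [S /and4P[HF HS /eqP e1 /eqP e2]]]].
  by left; exists F.
by right; exists F, S.
Qed.

Lemma g_in_B (F : {set {set E}}) : g \in Bface F.
Proof. by rewrite /Bface; apply/setUP; right; rewrite in_set1. Qed.

Lemma lower_not_upper (x y x' : {set {set E}}) : matchedM x y -> matchedM x' x -> False.
Proof.
case/matchedP => [[F [HF -> _]]|[F [S [HF HS -> _]]]]; case/matchedP => [[F' [HF' _ e]]|[F' [S' [HF' HS' _ e]]]].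
- by move: (g_notin HF); rewrite e g_in_B.
- have := C_sub_D (SC HS'); rewrite -e => /(face_vertex HF) /vertex_noTop.
  by rewrite !inE eqxx orbT.
- by move: (@g_notin_C F S HF); rewrite e g_in_B.
- have tS := vertex_noTop (face_vertex HF' HS').
  have H1 := S_in_D F' S'; have H2 := C_sub_D (SC HS').
  rewrite -e in H1 H2; exact: (noPair_C HF HS tS H1 H2).
Qed.

Lemma card_B (F : {set {set E}}) : face F -> #|Bface F| = #|F|.+1.
Proof. by move=> HF; rewrite /Bface setUC cardsU1 (g_notin HF). Qed.

Lemma card_D (F : {set {set E}}) (S : {set E}) : face F -> S \in F -> #|Dface F S| = #|Cface F S|.+1.
Proof. by move=> HF HS; rewrite /Dface setUC cardsU1 (S_notin_C HF HS). Qed.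

Lemma matched_card (x y : {set {set E}}) : matchedM x y -> x \subset y /\ #|y| = #|x|.+1.
Proof.
case/matchedP => [[F [HF -> ->]]|[F [S [HF HS -> ->]]]].
  by rewrite card_B // /Bface subsetUl.
by rewrite card_D // /Dface subsetUl.
Qed.

Lemma inQ_A (F : {set {set E}}) : face F -> inQ F.
Proof.
move=> HF; rewrite /inQ (face_A HF); apply/orP; left; apply/existsP; exists F.
by rewrite HF /Aface eqxx.
Qed.

Lemma inQ_B (F : {set {set E}}) : face F -> inQ (Bface F).
Proof.
move=> HF; rewrite /inQ (face_B HF); apply/orP; left; apply/existsP; exists F.
by rewrite HF eqxx orbT.
Qed.

Lemma inQ_C (F : {set {set E}}) S : face F -> S \in F -> inQ (Cface F S).
Proof.
move=> HF HS; rewrite /inQ (face_C HF HS); apply/orP; right; apply/existsP; exists F.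
apply/existsP; exists S; by rewrite HF HS eqxx.
Qed.

Lemma inQ_D (F : {set {set E}}) S : face F -> S \in F -> inQ (Dface F S).
Proof.
move=> HF HS; rewrite /inQ (face_D HF HS); apply/orP; right; apply/existsP; exists F.
apply/existsP; exists S; by rewrite HF HS eqxx orbT.
Qed.

Lemma matched_inQ (x y : {set {set E}}) : matchedM x y -> inQ x /\ inQ y.
Proof.
case/matchedP => [[F [HF -> ->]]|[F [S [HF HS -> ->]]]].
  by split; [exact: inQ_A | exact: inQ_B].
by split; [exact: inQ_C | exact: inQ_D].
Qed.

Lemma matched_cover (x y : {set {set E}}) : matchedM x y -> coverQ x y.
Proof.
move=> M; have [Qx Qy] := matched_inQ M; have [sxy cxy] := matched_card M.
rewrite /coverQ Qx Qy properEcard sxy cxy ltnSn /=.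
apply/forallP => z; apply/negP => /and3P[_ /proper_card h1 /proper_card h2].
move: h2; rewrite cxy ltnS leqNgt h1 //.
Qed.


Lemma sub_noTop (A B : {set E}) : top \notin A -> A \subset B :|: [set top] -> A \subset B.
Proof.
move=> t /subsetP H; apply/subsetP => x xA; have := H x xA; rewrite !inE => /orP[//|/eqP e].
by move: t; rewrite -e xA.
Qed.

Lemma C_inj (F F' : {set {set E}}) (S S' : {set E}) : face F -> S \in F -> face F' -> S' \in F' ->
  Cface F S = Cface F' S' -> S = S'.
Proof.
move=> HF HS HF' HS' e.
have tS := vertex_noTop (face_vertex HF HS).
have tS' := vertex_noTop (face_vertex HF' HS').
have h1 := SC HS; have h2 := SC HS'.
rewrite e in h1; rewrite -e in h2.
have s1 := sub_noTop tS' (topC_sub HF' h1 (set1Ur _ _)).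
have s2 := sub_noTop tS (topC_sub HF h2 (set1Ur _ _)).
by apply/eqP; rewrite eqEsubset s1 s2.
Qed.

Lemma B_K (F : {set {set E}}) : face F -> Bface F :\ g = F.
Proof. by move=> HF; rewrite /Bface setUC setU1K // g_notin. Qed.

Lemma D_K (F : {set {set E}}) S : face F -> S \in F -> Dface F S :\ S = Cface F S.
Proof. by move=> HF HS; rewrite /Dface setUC setU1K // S_notin_C. Qed.

Lemma matched_uniq (x y x' y' : {set {set E}}) : matchedM x y -> matchedM x' y' ->
  [|| x == x', x == y', y == x' | y == y'] -> x = x' /\ y = y'.
Proof.
move=> M M'; case/or4P => /eqP e.
- subst x'; split => //.
  case/matchedP: M => [[F [HF ex ->]]|[F [S [HF HS ex ->]]]];
  case/matchedP: M' => [[F' [HF' e ->]]|[F' [S' [HF' HS' e ->]]]]; subst x.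
  + by rewrite e.
  + have := SC HS'; rewrite -e => /(face_vertex HF) /vertex_noTop.
    by rewrite !inE eqxx orbT.
  + have := SC HS; rewrite e => /(face_vertex HF') /vertex_noTop.
    by rewrite !inE eqxx orbT.
  + have eS := C_inj HF HS HF' HS' e; by rewrite /Dface e eS.
- subst y'; case: (lower_not_upper M M').
- subst x'; case: (lower_not_upper M' M).
- subst y'; split => //.
  case/matchedP: M => [[F [HF -> e1]]|[F [S [HF HS -> e1]]]];
  case/matchedP: M' => [[F' [HF' -> e2]]|[F' [S' [HF' HS' -> e2]]]].
  + by rewrite -(B_K HF) -(B_K HF') -e1 -e2.
  + have := g_in_B F; rewrite -e1 e2 /Dface in_setU in_set1 (negbTE (@g_notin_C F' S' HF')) /=.
    by move=> /eqP eg; move: (g_notin HF'); rewrite eg HS'.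
  + have := g_in_B F'; rewrite -e2 e1 /Dface in_setU in_set1 (negbTE (@g_notin_C F S HF)) /=.
    by move=> /eqP eg; move: (g_notin HF); rewrite eg HS.
  + have tS := vertex_noTop (face_vertex HF HS).
    have h1 := S_in_D F S; have h2 := C_sub_D (SC HS).
    rewrite -e1 e2 in h1 h2.
    have eS := uniqPair_D HF' HS' tS h1 h2; subst S'.
    by rewrite -(D_K HF HS) -(D_K HF' HS') -e1 -e2.
Qed.


Definition p (u : {set {set E}}) := #|[set X in u | top \in X]|.
Definition upper (u : {set {set E}}) := [exists x, matchedM x u].

Lemma upper_of (x y : {set {set E}}) : matchedM x y -> upper y.
Proof. by move=> M; apply/existsP; exists x. Qed.

Lemma p_U1 (A : {set {set E}}) (a : {set E}) : top \notin a -> p (A :|: [set a]) = p A.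
Proof.
move=> t; rewrite /p; apply: eq_card => X; rewrite !inE.
by case: (X =P a) => [->|_]; rewrite ?(negbTE t) ?andbF ?orbF.
Qed.

Lemma p_D1 (u : {set {set E}}) (X : {set E}) : X \in u -> top \in X -> p u = (p (u :\ X)).+1.
Proof.
move=> Xu tX; rewrite /p (cardsD1 X) inE Xu tX /= add1n; congr (_.+1).
by apply: eq_card => Y; rewrite !inE andbA.
Qed.

Lemma matched_p (x y : {set {set E}}) : matchedM x y -> p y = p x.
Proof.
case/matchedP => [[F [HF -> ->]]|[F [S [HF HS -> ->]]]].
  by rewrite /Bface p_U1 // top_notin_g.
by rewrite /Dface p_U1 // (vertex_noTop (face_vertex HF HS)).
Qed.

Lemma inQ_lower (v : {set {set E}}) : inQ v -> ~~ upper v ->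
  (exists F, face F /\ v = F) \/ (exists F S, [/\ face F, S \in F & v = Cface F S]).
Proof.
case/andP => _ /orP[/existsP [F /andP[HF /orP[/eqP e|/eqP e]]]|/existsP [F /existsP [S /and3P[HF HS /orP[/eqP e|/eqP e]]]]] nu.
- by left; exists F.
- case/negP: nu; apply: (@upper_of F); apply/orP; left; apply/existsP; exists F; by rewrite HF e !eqxx.
- by right; exists F, S.
- case/negP: nu; apply: (@upper_of (Cface F S)); apply/orP; right; apply/existsP; exists F.
  apply/existsP; exists S; by rewrite HF HS e !eqxx.
Qed.

Lemma key (u v : {set {set E}}) : upper u -> inQ v -> ~~ upper v -> v \proper u ->
  #|u| = #|v|.+1 -> ~~ matchedM v u -> p v < p u.
Proof.
move=> /existsP [x M] Qv nv pr cu nM.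
have [X Xu Xv] : exists2 X, X \in u & X \notin v.
  by case/properP: pr => _ [X H1 H2]; exists X.
have ev : v = u :\ X.
  apply/eqP; rewrite eqEcard (cardD1E Xu) cu /= leqnn andbT; apply/subsetP => Y Yv.
  rewrite !inE; apply/andP; split; last by case/properP: pr => /subsetP ->.
  by apply/negP => /eqP e; rewrite -e Yv in Xv.
have [[F' [HF' ev']]|[F' [S' [HF' HS' ev']]]] := inQ_lower Qv nv;
case/matchedP: M => [[F [HF ex eu]]|[F [S [HF HS ex eu]]]].
-
  case: (X =P g) => [eX|nX].
    case/negP: nM; rewrite ev eu eX B_K //; apply/orP; left; apply/existsP; exists F.
    by rewrite HF !eqxx.
  have : g \in v by rewrite ev eu in_setD1 g_in_B eq_sym andbT; apply/eqP.
  by rewrite ev' (negbTE (g_notin HF')).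
-
  case: (X =P S) => [eX|nX].
    case/negP: nM; rewrite ev eu eX D_K //; apply/orP; right; apply/existsP; exists F.
    by apply/existsP; exists S; rewrite HF HS !eqxx.
  case tX: (top \in X).
    by rewrite ev (p_D1 Xu tX).
  have tS := vertex_noTop (face_vertex HF HS).
  have h1 : S \in v by rewrite ev eu in_setD1 S_in_D eq_sym andbT; apply/eqP.
  have h2 : S :|: [set top] \in v.
    rewrite ev eu in_setD1 (C_sub_D (SC HS)) andbT; apply/negP => /eqP e.
    by move: tX; rewrite -e set1Ur.
  by move: h2; rewrite ev' => /(face_vertex HF') /vertex_noTop; rewrite set1Ur.
-
  case: (X =P g) => [eX|nX].
    case/negP: nM; rewrite ev eu eX B_K //; apply/orP; left; apply/existsP; exists F.
    by rewrite HF !eqxx.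
  have : g \in v by rewrite ev eu in_setD1 g_in_B eq_sym andbT; apply/eqP.
  by rewrite ev' (negbTE (g_notin_C _ HF')).
-
  case: (X =P S) => [eX|nX].
    case/negP: nM; rewrite ev eu eX D_K //; apply/orP; right; apply/existsP; exists F.
    by apply/existsP; exists S; rewrite HF HS !eqxx.
  case tX: (top \in X).
    by rewrite ev (p_D1 Xu tX).
  have tS := vertex_noTop (face_vertex HF HS).
  have h1 : S \in v by rewrite ev eu in_setD1 S_in_D eq_sym andbT; apply/eqP.
  have h2 : S :|: [set top] \in v.
    rewrite ev eu in_setD1 (C_sub_D (SC HS)) andbT; apply/negP => /eqP e.
    by move: tX; rewrite -e set1Ur.
  rewrite ev' in h1 h2; case: (noPair_C HF' HS' tS h1 h2).
Qed.


Definition K := 2 * #|{set E}| + 2.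
Definition Phi (u : {set {set E}}) :=
  if upper u then K * (#|u|.-1) + 2 * p u else K * #|u| + 2 * p u + 1.

Lemma pK (u : {set {set E}}) : 2 * p u + 1 < K.
Proof. have H : p u <= #|{set E}| by exact: max_card. rewrite /K; move: H; set m := #|{set E}|; set q := p u; lia. Qed.

Lemma Phi_edge (u v : {set {set E}}) : morse_edge (@coverQ n) (@matchedM n) u v -> Phi v < Phi u.
Proof.
have pKu := pK u; have pKv := pK v.
case/orP => [/andP[C nM]|M].
  case/and4P: C => Qv Qu pr _.
  have c := proper_card pr.
  rewrite /Phi; case: ifP => Uv; case: ifP => Uu.
  - have [x Mx] := existsP Uv; have [_ cv] := matched_card Mx.
    move: c pKu pKv; rewrite cv; set a := #|x|; set b := #|u|; set pv := p v; set pu := p u; set k := K.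
    move=> h1 h2 h3; have h4 : k * a.+1 <= k * b.-1 by apply: leq_mul => //; lia.
    rewrite /=; move: h4; rewrite mulnS; lia.
  - have [x Mx] := existsP Uv; have [_ cv] := matched_card Mx.
    move: c pKu pKv; rewrite cv; set a := #|x|; set b := #|u|; set pv := p v; set pu := p u; set k := K.
    move=> h1 h2 h3; have h4 : k * a.+1 <= k * b by apply: leq_mul => //; lia.
    rewrite /=; move: h4; rewrite mulnS; lia.
  - have [eb|nb] := eqVneq #|u| #|v|.+1.
      have := key Uu Qv (negbT Uv) pr eb nM.
      move: pKu pKv; rewrite eb /=; set a := #|v|; set pv := p v; set pu := p u; set k := K.
      lia.
    move: c nb pKu pKv; set a := #|v|; set b := #|u|; set pv := p v; set pu := p u; set k := K.
    move=> h1 h1' h2 h3; have h4 : k * a.+1 <= k * b.-1 by apply: leq_mul => //; lia.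
    move: h4; rewrite mulnS; lia.
  - move: c pKu pKv; set a := #|v|; set b := #|u|; set pv := p v; set pu := p u; set k := K.
    move=> h1 h2 h3; have h4 : k * a.+1 <= k * b by apply: leq_mul => //; lia.
    move: h4; rewrite mulnS; lia.
have Uv := upper_of M.
have Uu : upper u = false.
  case Uu': (upper u) => //; have [x Mx] := existsP Uu'; case: (lower_not_upper M Mx).
have [_ cv] := matched_card M; have ep := matched_p M.
rewrite /Phi Uv Uu cv ep /=; lia.
Qed.

Lemma ct_dec (x y : {set {set E}}) :
  clos_trans _ (fun u v => morse_edge (@coverQ n) (@matchedM n) u v) x y -> Phi y < Phi x.
Proof.
elim => [a b /Phi_edge //|a b c _ H1 _ H2]; exact: ltn_trans H2 H1.
Qed.

End S.

Theorem mainTheorem10 (n : nat) (hn : 3 <= n) :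
  is_morse_matching (@coverQ n) (@matchedM n).
Proof.
split; first split.
- move=> x y M; exact: (matched_cover hn M).
- move=> x y x' y' M1 M2 H; exact: (matched_uniq hn M1 M2 H).
- by move=> x /(ct_dec hn); rewrite ltnn.
Qed.
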